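(* For every integer $n\ge 2$, with $$q(n,k)=\sum_{\overline{A}\in\overline{\mathfrak{B}}_{n,k}}|\overline{A}|\prod_{i=0}^{n-2}\left[(n-i)!\right]^{\psi_i(\overline{A})},$$ one has $q(n,0)=q(n,1)=(n!)^{2n}=|\Pi_n|=|\Sigma_{n^2}|$.
   Context: $[n]=\{1,\dots,n\}$. $\mathfrak{B}_n$ is the set of $n\times n$ binary matrices and $\mathfrak{B}_{n,k}$ those with exactly $k$ ones. For $A\in\mathfrak{B}_n$, $r_k(A)$ (resp. $c_k(A)$) is the number of rows (resp. columns) of $A$ with exactly $k$ ones and $\psi_k(A)=r_k(A)+c_k(A)$. $A\sim B$ iff $B$ is obtained from $A$ by permuting rows; $\overline{A}$ is the equivalence class of $A$, $|\overline{A}|$ its cardinality, $\overline{\mathfrak{B}}_{n,k}=\mathfrak{B}_{n,k}/\!\sim$; $\psi_k$ is defined on classes via representatives. $\Pi_n$ is the set of all $n\times n$ matrices whose entries are ordered pairs $\langle i,j\rangle$, $i,j\in[n]$, such that in each row the first coordinates form a permutation of $[n]$ and in each column the second coordinates form a permutation of $[n]$. $\Sigma_{n^2}$ is the set of $n^2\times n^2$ binary matrices which, when partitioned into $n^2$ consecutive $n\times n$ blocks, contain exactly one $1$ in each row, each column and each block. *)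

(* Defs.v *)
From HB Require Import structures.
From mathcomp Require Import all_boot all_order all_fingroup all_algebra.
Set Implicit Arguments. Unset Strict Implicit. Unset Printing Implicit Defensive.

(* B_n : n x n binary matrices, represented as 'M[bool]_n (true = 1). *)
Definition ones n (A : 'M[bool]_n) : nat := #|[set ij : 'I_n * 'I_n | A ij.1 ij.2]|.

Definition Bnk n k : {set 'M[bool]_n} := [set A | ones A == k].

Definition rk n k (A : 'M[bool]_n) : nat := #|[set i : 'I_n | #|[set j | A i j]| == k]|.
Definition ck n k (A : 'M[bool]_n) : nat := #|[set j : 'I_n | #|[set i | A i j]| == k]|.
Definition psi n k (A : 'M[bool]_n) : nat := rk k A + ck k A.

Definition rclass n (A : 'M[bool]_n) : {set 'M[bool]_n} :=
  [set B | [exists s : 'S_n, B == row_perm s A]].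

Definition classes n k : {set {set 'M[bool]_n}} := [set rclass A | A in Bnk n k].

Definition rep n (C : {set 'M[bool]_n}) : 'M[bool]_n :=
  odflt (const_mx false) [pick A in C].

Definition q n k : nat :=
  \sum_(C in classes n k)
     #|C| * \prod_(0 <= i < n.-1) ((n - i)`!) ^ (psi i (rep C)).

Definition Pi n : {set 'M[('I_n * 'I_n)%type]_n} :=
  [set M : 'M[('I_n * 'I_n)%type]_n | [forall i, injectiveb (fun j => (M i j).1)] &&
           [forall j, injectiveb (fun i => (M i j).2)]].

Definition Sigma n : {set 'M[bool]_(n ^ 2)} :=
  [set M : 'M[bool]_(n ^ 2) | [&& [forall i, #|[set j | M i j]| == 1],
               [forall j, #|[set i | M i j]| == 1] &
               [forall b : 'I_n * 'I_n,
                  #|[set ij : 'I_(n ^ 2) * 'I_(n ^ 2) |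
                       [&& M ij.1 ij.2, ij.1 %/ n == b.1 & ij.2 %/ n == b.2]]| == 1]]].

(* Main.v *)
Require Import Defs.
From mathcomp Require Import all_boot all_order all_fingroup all_algebra.
From mathcomp Require Import zify.
Set Implicit Arguments. Unset Strict Implicit.

Definition mkperm (T : finType) (h : T -> T) : {perm T} := insubd (1%g : {perm T}) [ffun x => h x].

Lemma mkpermE (T : finType) (h : T -> T) : injective h -> mkperm h =1 h.
Proof.
move=> hi x; rewrite /mkperm.
rewrite -pvalE.
rewrite -[pval _]/(val (insubd (1%g : {perm T}) [ffun x => h x])).
rewrite insubdK ?ffunE //.
by apply/injectiveP => a b; rewrite !ffunE => /hi.
Qed.

Lemma pickU (T : finType) (P : pred T) d : #|[set x | P x]| == 1 ->
  forall y, P y = (y == odflt d [pick x | P x]).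
Proof.
move=> /cards1P [x Hx].
have HP : forall y, P y = (y == x).
  by move=> y; have := congr1 (fun S : {set T} => y \in S) Hx; rewrite /= !inE.
case: pickP => [z Pz|/(_ x)]; last by rewrite HP eqxx.
by rewrite HP in Pz; rewrite (eqP Pz).
Qed.

Section Sig.
Variable m : nat.
Local Notation n := m.+1.

Lemma idx_proof (a b : 'I_n) : a * n + b < n ^ 2.
Proof. have := ltn_ord a; have := ltn_ord b; nia. Qed.
Definition idx (a b : 'I_n) : 'I_(n ^ 2) := Ordinal (idx_proof a b).
Lemma hi_proof (i : 'I_(n ^ 2)) : i %/ n < n.
Proof. by rewrite ltn_divLR // -expnSr ltn_ord. Qed.
Definition hi (i : 'I_(n ^ 2)) : 'I_n := Ordinal (hi_proof i).
Lemma lo_proof (i : 'I_(n ^ 2)) : i %% n < n.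
Proof. by rewrite ltn_pmod. Qed.
Definition lo (i : 'I_(n ^ 2)) : 'I_n := Ordinal (lo_proof i).

Lemma hi_idx a b : hi (idx a b) = a.
Proof. by apply: val_inj; rewrite /= divnMDl // divn_small ?addn0. Qed.
Lemma lo_idx a b : lo (idx a b) = b.
Proof. by apply: val_inj; rewrite /= modnMDl modn_small. Qed.
Lemma idx_hilo i : idx (hi i) (lo i) = i.
Proof. by apply: val_inj; rewrite /= -divn_eq. Qed.
Lemma idx_eq j b c : (j == idx b c) = (hi j == b) && (lo j == c).
Proof.
apply/eqP/andP => [->|[/eqP <- /eqP <-]]; last by rewrite idx_hilo.
by rewrite hi_idx lo_idx.
Qed.
Lemma idx_inj a b a' b' : idx a b = idx a' b' -> a = a' /\ b = b'.
Proof. move=> H; split; [rewrite -(hi_idx a b) H hi_idx | rewrite -(lo_idx a b) H lo_idx]; done. Qed.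

Lemma eq_perm_l (s : 'S_n) x y : (s x == y) = (x == (s^-1)%g y).
Proof. by apply/eqP/eqP => [<-|->]; rewrite ?permK ?permKV. Qed.

Definition Dom := ({ffun 'I_n -> 'S_n} * {ffun 'I_n -> 'S_n})%type.

Definition SF (fg : Dom) : 'M[bool]_(n ^ 2) :=
  \matrix_(i, j) ((fg.1 (hi i) (lo i) == hi j) && (fg.2 (hi j) (hi i) == lo j)).

Lemma SF_inj : injective SF.
Proof.
move=> [f g] [f' g'] /matrixP E.
have key : forall a r, f' a r = f a r /\ g' (f a r) a = g (f a r) a.
  move=> a r; have := E (idx a r) (idx (f a r) (g (f a r) a)).
  rewrite !mxE /= !hi_idx !lo_idx !eqxx /= => /esym/andP [/eqP H1 /eqP H2].
  by rewrite H1 in H2 *.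
congr pair; apply/ffunP => a; apply/permP => r.
- by case: (key a r).
- by have [_] := key r ((f r)^-1 a)%g; rewrite permKV => ->.
Qed.

Lemma SF_Sigma fg : SF fg \in Sigma n.
Proof.
case: fg => f g; rewrite inE; apply/and3P; split.
- apply/forallP => i; apply/cards1P; exists (idx (f (hi i) (lo i)) (g (f (hi i) (lo i)) (hi i))).
  apply/setP => j; rewrite !inE mxE /= idx_eq.
  rewrite [hi j == _]eq_sym [lo j == _]eq_sym; case: (f _ _ =P hi j) => //= ->; by apply/eqP/eqP.
- apply/forallP => j; apply/cards1P.
  pose a := ((g (hi j))^-1 (lo j))%g; exists (idx a ((f a)^-1 (hi j))%g).
  apply/setP => i; rewrite !inE mxE /= idx_eq.
  rewrite [g _ _ == _]eq_perm_l -/a andbC; case: (hi i =P a) => [->|] //=; first by rewrite eq_perm_l; apply/eqP/eqP.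
- apply/forallP => -[a b] /=; apply/cards1P.
  exists (idx a ((f a)^-1 b)%g, idx b (g b a)).
  apply/setP => -[i j]; rewrite !inE /= mxE xpair_eqE !idx_eq.
  rewrite -[i %/ n == a]/(hi i == a) -[j %/ n == b]/(hi j == b).
  case: (hi i =P a) => [->|]; last by rewrite !andbF.
  case: (hi j =P b) => [->|]; last by rewrite !andbF.
  rewrite eq_perm_l [g b a == _]eq_sym; by case: (_ == _); case: (_ == _).
Qed.

Lemma hiE (i : 'I_(n ^ 2)) (a : 'I_n) : (hi i == a) = (i %/ n == a).
Proof. by []. Qed.

Lemma hilo_eq (i j : 'I_(n ^ 2)) : hi i = hi j -> lo i = lo j -> i = j.
Proof. by move=> h l; rewrite -(idx_hilo i) h l idx_hilo. Qed.

Lemma Sigma_SF M : M \in Sigma n -> exists fg, M = SF fg.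
Proof.
rewrite inE => /and3P [/forallP Hr /forallP Hc /forallP Hb].
pose col i := odflt i [pick j | M i j].
have Hcol : forall i j, M i j = (j == col i) by move=> i j; apply: (pickU (P := fun j => M i j)); exact: Hr.
pose row j := odflt j [pick i | M i j].
have Hrow : forall i j, M i j = (i == row j) by move=> i j; apply: (pickU (P := fun i => M i j)); exact: Hc.
pose P (a b : 'I_n) := fun ij : 'I_(n ^ 2) * 'I_(n ^ 2) =>
  [&& M ij.1 ij.2, ij.1 %/ n == a & ij.2 %/ n == b].
pose blk a b := odflt (idx a a, idx b b) [pick ij | P a b ij].
have PE : forall a b i j, P a b (i, j) = [&& M i j, hi i == a & hi j == b] by [].
have Hblk : forall a b ij, P a b ij = (ij == blk a b).
  by move=> a b; exact: (pickU _ (Hb (a, b))).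
have Pblk : forall a b, [/\ M (blk a b).1 (blk a b).2, hi (blk a b).1 = a & hi (blk a b).2 = b].
  move=> a b; have := Hblk a b (blk a b); rewrite eqxx => /and3P [h1 h2 h3].
  by split => //; apply/eqP.
have finj : forall a, injective (fun r => hi (col (idx a r))).
  move=> a r r' E.
  have H1 : P a (hi (col (idx a r))) (idx a r, col (idx a r)).
    by rewrite PE Hcol hi_idx !eqxx.
  have H2 : P a (hi (col (idx a r))) (idx a r', col (idx a r')).
    by rewrite PE Hcol hi_idx E !eqxx.
  rewrite Hblk in H1; rewrite Hblk in H2.
  by have [_] := idx_inj (congr1 fst (etrans (eqP H1) (esym (eqP H2)))).
have ginj : forall b, injective (fun a => lo (blk a b).2).
  move=> b a a' E.
  have [h1 h2 h3] := Pblk a b; have [h1' h2' h3'] := Pblk a' b.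
  have ej : (blk a b).2 = (blk a' b).2 by apply: hilo_eq; rewrite ?h3 ?h3'.
  rewrite ej Hrow in h1; rewrite Hrow in h1'.
  by rewrite -h2 -h2' (eqP h1) (eqP h1').
exists ([ffun a => mkperm (fun r => hi (col (idx a r)))], [ffun b => mkperm (fun a => lo (blk a b).2)]).
apply/matrixP => i j; rewrite mxE /= !ffunE !mkpermE // idx_hilo.
apply/idP/andP => [Mij|[/eqP h1 /eqP h2]].
- have cj : col i = j by apply/esym/eqP; rewrite -Hcol.
  have : P (hi i) (hi j) (i, j) by rewrite PE Mij !eqxx.
  by rewrite Hblk => /eqP <-; rewrite cj !eqxx.
- have : P (hi i) (hi j) (i, col i) by rewrite PE Hcol h1 !eqxx.
  rewrite Hblk => /eqP E; rewrite -E /= in h2.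
  rewrite Hcol; apply/eqP/esym/hilo_eq => //.
Qed.

Lemma card_Sigma_aux : #|Sigma n| = (n`!) ^ (2 * n).
Proof.
have -> : Sigma n = SF @: setT.
  apply/setP => M; apply/idP/imsetP => [/Sigma_SF [fg ->]|[fg _ ->]]; last exact: SF_Sigma.
  by exists fg.
rewrite card_imset; last exact: SF_inj.
rewrite cardsT card_prod !card_ffun !card_Sn !card_ord.
by rewrite -expnD addnn -mul2n.
Qed.

End Sig.

Definition PiF n (fg : {ffun 'I_n -> {perm 'I_n}} * {ffun 'I_n -> {perm 'I_n}}) :
  'M[('I_n * 'I_n)%type]_n := \matrix_(i, j) (fg.1 i j, fg.2 j i).

Lemma PiF_inj n : injective (@PiF n).
Proof.
move=> [f g] [f' g'] /matrixP E.
congr pair; apply/ffunP => i; apply/permP => j.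
- by have := E i j; rewrite !mxE => -[].
- by have := E j i; rewrite !mxE => -[].
Qed.

Lemma card_Pi n : #|Pi n| = (n`!) ^ (2 * n).
Proof.
have -> : Pi n = @PiF n @: setT.
  apply/setP => M; rewrite inE; apply/andP/imsetP.
  - move=> [/forallP H1 /forallP H2].
    exists ([ffun i => mkperm (fun j => (M i j).1)], [ffun j => mkperm (fun i => (M i j).2)]) => //.
    apply/matrixP => i j; rewrite !mxE /= !ffunE !mkpermE; first by case: (M i j).
    + exact/injectiveP/H2.
    + exact/injectiveP/H1.
  - move=> [[f g] _ ->]; split; apply/forallP => i; apply/injectiveP => a b; rewrite !mxE /=;
      exact: perm_inj.
rewrite card_imset; last exact: PiF_inj.
rewrite cardsT card_prod !card_ffun !card_Sn !card_ord.
by rewrite -expnD addnn -mul2n.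
Qed.


Lemma cnt_pt n (i : 'I_n) k :
  #|[set a : 'I_n | nat_of_bool (a == i) == k]| = if k == 0 then n.-1 else if k == 1 then 1 else 0.
Proof.
case: k => [|[|k]] /=.
- have := cardsC1 i; rewrite card_ord => <-; apply: eq_card => a; rewrite !inE; by case: (a == i).
- rewrite -[RHS](cards1 i); apply: eq_card => a; rewrite !inE; by case: (a == i).
- apply/eqP; rewrite cards_eq0; apply/eqP/setP => a; rewrite !inE; by case: (a == i).
Qed.

Definition Z n : 'M[bool]_n := const_mx false.
Definition E n (i j : 'I_n) : 'M[bool]_n := \matrix_(a, b) ((a == i) && (b == j)).

Lemma psiZ n k : psi k (Z n) = if k == 0 then 2 * n else 0.
Proof.
have H : forall (P : 'I_n -> 'I_n -> bool), (forall a b, P a b = false) ->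
   #|[set a | #|[set b | P a b]| == k]| = if k == 0 then n else 0.
  move=> P HP; case: k => [|k] /=.
  - rewrite -[n in RHS](card_ord n) -cardsT; apply: eq_card => a; rewrite !inE.
    by apply/eqP/eqP; rewrite cards_eq0; apply/eqP/setP => b; rewrite !inE HP.
  - apply/eqP; rewrite cards_eq0; apply/eqP/setP => a; rewrite !inE.
    have -> : [set b | P a b] = set0 by apply/setP => b; rewrite !inE HP.
    by rewrite cards0.
rewrite /psi /rk /ck !H => [|a b|a b]; rewrite ?mxE //; case: (k == 0) => //; by rewrite mul2n addnn.
Qed.

Lemma psiE n (i j : 'I_n) k :
  psi k (E i j) = if k == 0 then 2 * n.-1 else if k == 1 then 2 else 0.
Proof.
rewrite /psi /rk /ck.
have -> : [set a | #|[set b | E i j a b]| == k] = [set a : 'I_n | nat_of_bool (a == i) == k].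
  apply/setP => a; rewrite !inE; case: (a =P i) => [->|ne] /=.
  - have -> : [set b | E i j i b] = [set j] by apply/setP => b; rewrite !inE mxE eqxx.
    by rewrite cards1.
  - have -> : [set b | E i j a b] = set0 by apply/setP => b; rewrite !inE mxE; case: eqP.
    by rewrite cards0.
have -> : [set b | #|[set a | E i j a b]| == k] = [set b : 'I_n | nat_of_bool (b == j) == k].
  apply/setP => b; rewrite !inE; case: (b =P j) => [->|ne] /=.
  - have -> : [set a | E i j a j] = [set i] by apply/setP => a; rewrite !inE mxE eqxx andbT.
    by rewrite cards1.
  - have -> : [set a | E i j a b] = set0 by apply/setP => a; rewrite !inE mxE; case: (b =P j); rewrite ?andbF.
    by rewrite cards0.
rewrite !cnt_pt; case: k => [|[|k]] //=; by rewrite mul2n addnn.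
Qed.

Lemma prod_rest (F : nat -> nat) a b : (forall i, a <= i < b -> F i = 1) -> \prod_(a <= i < b) F i = 1.
Proof. move=> H; rewrite big_nat_cond; apply: big1 => i /andP[Hi _]; exact: H. Qed.

Lemma row_perm_Z n (s : 'S_n) : row_perm s (Z n) = Z n.
Proof. by apply/matrixP => a b; rewrite !mxE. Qed.

Lemma Bn0 n : Bnk n 0 = [set Z n].
Proof.
apply/setP => A; rewrite !inE /ones cards_eq0; apply/eqP/eqP => [H|->].
- apply/matrixP => a b; rewrite mxE; apply/negbTE/negP => Hab.
  have : (a, b) \in [set ij : 'I_n * 'I_n | A ij.1 ij.2] by rewrite inE.
  by rewrite H inE.
- by apply/setP => ij; rewrite !inE mxE.
Qed.

Lemma rclassZ n : rclass (Z n) = [set Z n].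
Proof.
apply/setP => B; rewrite !inE; apply/existsP/eqP => [[s /eqP ->]|->].
- exact: row_perm_Z.
- by exists 1%g; rewrite row_perm_Z.
Qed.

Lemma rep1 n (A : 'M[bool]_n) : rep [set A] = A.
Proof. rewrite /rep; case: pickP => [x|/(_ A)]; rewrite !inE ?eqxx //; by move/eqP. Qed.

Lemma qE n k : q n k = (\sum_(C in Defs.classes n k)
     #|C| * \prod_(0 <= i < n.-1) ((n - i)`!) ^ (psi i (rep C)))%N.
Proof. by []. Qed.

Lemma q0 m : q m.+2 0 = (m.+2`!) ^ (2 * m.+2).
Proof.
rewrite qE /Defs.classes Bn0 imset_set1 rclassZ big_set1 cards1 mul1n rep1.
rewrite big_ltn // psiZ eqxx subn0 prod_rest ?muln1 // => i /andP[Hi _].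
by rewrite psiZ; case: i Hi.
Qed.

Lemma prodE m (i j : 'I_m.+2) :
  \prod_(0 <= k < m.+1) ((m.+2 - k)`!) ^ (psi k (E i j)) = (m.+2`!) ^ (2 * m.+1) * (m.+1`!) ^ 2.
Proof.
rewrite big_ltn // psiE eqxx subn0 /=.
case: m i j => [|m] i j.
- by rewrite big_geq.
rewrite big_ltn // psiE /= prod_rest ?muln1 // => k /andP[Hk _].
by rewrite psiE; case: k Hk => [|[|k]].
Qed.

Definition Cl n (j : 'I_n) : {set 'M[bool]_n} := [set E a j | a : 'I_n].

Lemma E_inj n (a a' b b' : 'I_n) : E a b = E a' b' -> a = a' /\ b = b'.
Proof.
move/matrixP/(_ a b); rewrite !mxE !eqxx => /esym/andP[/eqP -> /eqP ->]; done.
Qed.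

Lemma row_perm_E n (s : 'S_n) i j : row_perm s (E i j) = E (s^-1 i)%g j.
Proof.
apply/matrixP => a b; rewrite !mxE; congr (_ && _).
apply/eqP/eqP => [<-|->]; by rewrite ?permK ?permKV.
Qed.

Lemma rclassE n (i j : 'I_n) : rclass (E i j) = Cl j.
Proof.
apply/setP => B; rewrite !inE; apply/existsP/imsetP => [[s /eqP ->]|[a _ ->]].
- by rewrite row_perm_E; exists (s^-1 i)%g.
- exists (tperm i a); rewrite row_perm_E tpermV tpermL //.
Qed.

Lemma E_Bnk n (i j : 'I_n) : E i j \in Bnk n 1.
Proof.
rewrite inE /ones; apply/eqP; rewrite -(cards1 (i, j)); apply: eq_card => -[a b].
by rewrite !inE mxE /= xpair_eqE.
Qed.

Lemma Bnk1 n A : A \in Bnk n 1 -> exists i j, A = E i j.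
Proof.
rewrite inE /ones => /cards1P [[i j] H]; exists i, j.
apply/matrixP => a b; rewrite mxE.
have := congr1 (fun S : {set 'I_n * 'I_n} => (a, b) \in S) H; rewrite /= !inE xpair_eqE //.
Qed.

Lemma classes1 n : Defs.classes n 1 = [set Cl j | j : 'I_n].
Proof.
apply/setP => C; apply/imsetP/imsetP => [[A /Bnk1 [i [j ->]] ->]|[j _ ->]].
- by exists j => //; rewrite rclassE.
- by exists (E j j); [exact: E_Bnk | rewrite rclassE].
Qed.

Lemma Cl_inj n : injective (@Cl n).
Proof.
move=> j j' H; have : E j j \in Cl j' by rewrite -H; apply/imsetP; exists j.
by case/imsetP => a _ /E_inj [].
Qed.

Lemma card_Cl n (j : 'I_n) : #|Cl j| = n.
Proof. rewrite card_imset ?card_ord // => a a' /E_inj []; done. Qed.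

Lemma rep_Cl n (j : 'I_n) : exists a, rep (Cl j) = E a j.
Proof.
rewrite /rep; case: pickP => [x /imsetP [a _ ->]|/(_ (E j j))]; first by exists a.
by rewrite (_ : E j j \in Cl j) //; apply/imsetP; exists j.
Qed.

Lemma q1 m : q m.+2 1 = (m.+2`!) ^ (2 * m.+2).
Proof.
rewrite qE classes1 big_imset /=; last by move=> j j' _ _; exact: Cl_inj.
rewrite (eq_bigr (fun _ => m.+2 * ((m.+2`!) ^ (2 * m.+1) * (m.+1`!) ^ 2))); last first.
  move=> j _; rewrite card_Cl; have [a ->] := rep_Cl j; by rewrite prodE.
rewrite sum_nat_const card_ord.
rewrite (mulnS 2 m.+1) expnD.
set X := _ ^ (2 * m.+1).
rewrite (factS m.+1) expnMn. set Y := _ ^ 2. rewrite -!mulnn; lia.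
Qed.

Unset Implicit Arguments.

Theorem mainTheorem4 (n : nat) : 2 <= n ->
  [/\ q n 0 = (n`!) ^ (2 * n),
      q n 1 = (n`!) ^ (2 * n),
      #|Pi n| = (n`!) ^ (2 * n) &
      #|Sigma n| = (n`!) ^ (2 * n)].
Proof.
case: n => [|[|m]] // _.
split; [exact: q0 | exact: q1 | exact: card_Pi | exact: (card_Sigma_aux m.+1)].
Qed.
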